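(* Let $n\ge 1$, $w\in S_n$, and let $D^w$ be its rank matrix. Extend it by $D^w_{0,q}=D^w_{p,0}=0$ for all $p,q$. Call a position $(p,q)\in\{1,\dots,n\}^2$ non-redundant if $D^w_{p,q}\neq D^w_{p-1,q}$ and $D^w_{p,q}\neq D^w_{p,q-1}$. Then the number of non-redundant positions $(p,q)$ with $1\le D^w_{p,q}\le n-1$ equals $l(w)+n-1$.
   Context: $S_n$ is the symmetric group and $l(w)$ is the number of inversions of $w$, i.e. $\#\{(i,j): i<j,\ w(i)>w(j)\}$. The rank matrix of $w$ is the $n\times n$ integer matrix $D^w$ with $D^w_{p,q}=\#\{i\in\{1,\dots,n\}: i\le p,\ w(i)\le q\}$. Interpretation: in the product $\prod_{p,q}\mathrm{Gr}_{D^w_{p,q}}(E)$ carrying inclusions $\ell_{p,q}\subset\ell_{p,q+1}$ and $\ell_{p,q}\subset\ell_{p+1,q}$, a factor is redundant exactly when its dimension equals that of its left or upper neighbour. The non-redundant positions with $1\le D^w_{p,q}\le n-1$ are therefore the copies of Grassmannians $\mathrm{Gr}_i$, $1\le i\le n-1$, that remain after eliminating this redundancy. *)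

(* Defs.v *)
From mathcomp Require Import all_boot all_order all_fingroup.
Set Implicit Arguments. Unset Strict Implicit. Unset Printing Implicit Defensive.

(* Permutations of {1..n} are modelled as 'S_n = {perm 'I_n}, with the
   shift i <-> i+1 between 'I_n = {0..n-1} and {1..n}. *)

Definition inv_count n (w : 'S_n) : nat :=
  #|[set ij : 'I_n * 'I_n | (ij.1 < ij.2) && (w ij.2 < w ij.1)]|.

(* Rank matrix D^w_{p,q} = #{i in {1..n} : i <= p, w(i) <= q}, for p,q : nat.
   In 0-indexed form: i+1 <= p <-> i < p, w(i)+1 <= q <-> w(i) < q.
   In particular D^w_{0,q} = D^w_{p,0} = 0 (the extension in the paper). *)
Definition rankD n (w : 'S_n) (p q : nat) : nat :=
  #|[set i : 'I_n | (i < p) && (w i < q)]|.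

Definition nonredundant n (w : 'S_n) (p q : nat) : bool :=
  (rankD w p q != rankD w p.-1 q) && (rankD w p q != rankD w p q.-1).

Definition count_nonred n (w : 'S_n) : nat :=
  #|[set pq : 'I_n * 'I_n |
     let p := pq.1.+1 in let q := pq.2.+1 in
     [&& nonredundant w p q, 1 <= rankD w p q & rankD w p q <= n.-1]]|.

(* Main.v *)
Require Import Defs.
From mathcomp Require Import all_boot all_order all_fingroup.
From mathcomp Require Import zify.
Set Implicit Arguments. Unset Strict Implicit.

Lemma card_sum (T : finType) (P : pred T) : #|[set x | P x]| = \sum_x (P x : nat).
Proof.
rewrite -sum1_card big_mkcond /=; apply: eq_bigr => x _; rewrite inE.
by case: (P x).
Qed.

Lemma sum_pred1 (T : finType) (c : T) (P : pred T) :
  \sum_i ((i == c) && P i : nat) = P c.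
Proof.
rewrite (bigD1 c) //= eqxx big1 ?addn0 // => i /negbTE ->; done.
Qed.

Arguments sum_pred1 {T}.
Lemma sum_eq1 (T : finType) (c : T) : \sum_i (i == c : nat) = 1.
Proof.
rewrite (eq_bigr (fun j => ((j == c) && predT j : nat))); first exact: sum_pred1.
by move=> j _; rewrite andbT.
Qed.
Lemma rank_sum n (w : 'S_n) p q : rankD w p q = \sum_(i : 'I_n) ((i < p) && (w i < q) : nat).
Proof. by rewrite /rankD card_sum. Qed.

Lemma rank_stepp n (w : 'S_n) (a : 'I_n) q :
  rankD w a.+1 q = rankD w a q + (w a < q).
Proof.
rewrite !rank_sum -(sum_pred1 a (fun i => w i < q)) -big_split /=.
apply: eq_bigr => i _; rewrite ltnS leq_eqVlt.
case: (eqVneq i a) => [->|ne]; first by rewrite ltnn eqxx /=; case: (w a < q).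
have -> : (nat_of_ord i == a) = false by rewrite val_eqE; apply/negbTE.
by rewrite /= addn0.
Qed.

Lemma rank_stepq n (w : 'S_n) (b : 'I_n) p :
  rankD w p b.+1 = rankD w p b + (w^-1%g b < p).
Proof.
rewrite !rank_sum -(sum_pred1 (w^-1%g b) (fun i => i < p)) -big_split /=.
apply: eq_bigr => i _; rewrite [_ < b.+1]ltnS [_ <= b]leq_eqVlt.
case: (eqVneq i (w^-1%g b)) => [->|ne] /=.
  by rewrite permKV eqxx ltnn /= andbT andbF; case: (_ < p).
have -> : (nat_of_ord (w i) == b) = false.
  apply/negbTE; rewrite val_eqE; apply: contra_neq ne => <-; by rewrite permK.
by rewrite /= addn0.
Qed.

Lemma nonred_char n (w : 'S_n) (a b : 'I_n) :
  nonredundant w a.+1 b.+1 = (w a <= b) && (w^-1%g b <= a).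
Proof.
rewrite /nonredundant /=.
have e1 := rank_stepp w a b.+1; have e2 := rank_stepq w b a.+1.
move: e1 e2; rewrite !ltnS.
move: (rankD w a.+1 b.+1) (rankD w a b.+1) (rankD w a.+1 b) => X Y Z.
case: (w a <= b); case: (w^-1%g b <= a) => /= e1 e2; rewrite {1}e1 e2 ?addn0 ?eqxx ?andbF //.
apply/andP; split; apply/negP => /eqP; lia.
Qed.

Lemma Dbound m (w : 'S_m.+1) (a b : 'I_m.+1) :
  (w a <= b) -> (w^-1%g b <= a) ->
  (rankD w a.+1 b.+1 <= m) = ~~ ((a == ord_max) && (b == ord_max)).
Proof.
move=> h1 h2.
case: (eqVneq a ord_max) => [->|na]; case: (eqVneq b ord_max) => [->|nb] /=.
- rewrite /rankD.
  have -> : [set i : 'I_m.+1 | (i < (@ord_max m).+1) && (w i < (@ord_max m).+1)] = setT.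
    by apply/setP => i; rewrite !inE !ltnS !leq_ord.
  by rewrite cardsT card_ord ltnn.
- apply: (@leq_trans #|[set~ (w^-1%g ord_max)]|); last by rewrite cardsC1 card_ord.
  apply: subset_leq_card; apply/subsetP => i; rewrite !inE => /andP [_ hi].
  apply/eqP => ei; move: hi; rewrite ei permKV ltnS /= => hb.
  by apply: (negP nb); apply/eqP/val_inj => /=; have := ltn_ord b; lia.
- apply: (@leq_trans #|[set~ (@ord_max m)]|); last by rewrite cardsC1 card_ord.
  apply: subset_leq_card; apply/subsetP => i; rewrite !inE => /andP [hi _].
  apply/eqP => ei; move: hi; rewrite ei ltnS /= => hb.
  by apply: (negP na); apply/eqP/val_inj => /=; have := ltn_ord a; lia.
- apply: (@leq_trans #|[set~ (@ord_max m)]|); last by rewrite cardsC1 card_ord.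
  apply: subset_leq_card; apply/subsetP => i; rewrite !inE => /andP [hi _].
  apply/eqP => ei; move: hi; rewrite ei ltnS /= => hb.
  by apply: (negP na); apply/eqP/val_inj => /=; have := ltn_ord a; lia.
Qed.

Lemma sum_C m (w : 'S_m.+1) :
  \sum_(ab : 'I_m.+1 * 'I_m.+1) ((w ab.1 <= ab.2) && (w^-1%g ab.2 <= ab.1) : nat)
  = inv_count w + m.+1.
Proof.
rewrite -(pair_bigA _ (fun a (b : 'I_m.+1) => ((w a <= b) && (w^-1%g b <= a) : nat))) /=.
rewrite (eq_bigr (fun a => \sum_(i : 'I_m.+1) ((w a <= w i) && (i <= a) : nat))); last first.
  move=> a _; rewrite (reindex_inj (@perm_inj _ w)) /=.
  by apply: eq_bigr => i _; rewrite permK.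
rewrite exchange_big /= (pair_bigA _ (fun (i a : 'I_m.+1) => ((w a <= w i) && (i <= a) : nat))) /=.
rewrite /inv_count card_sum.
have E : \sum_(ij : 'I_m.+1 * 'I_m.+1) (ij.1 == ij.2 : nat) = m.+1.
  rewrite -(pair_bigA _ (fun i j : 'I_m.+1 => (i == j : nat))) /=.
  rewrite -[RHS]card_ord -sum1_card; apply: eq_bigr => i _.
  rewrite (eq_bigr (fun j => ((j == i) && predT j : nat))); first exact: sum_pred1.
  by move=> j _; rewrite eq_sym andbT.
rewrite -[X in _ = _ + X]E -big_split /=; apply: eq_bigr => [[i j]] _ /=.
case: (eqVneq i j) => [->|ne]; first by rewrite !leqnn ltnn.
have ne' : (nat_of_ord i != j) by rewrite val_eqE.
have nw : (nat_of_ord (w j) != w i) by rewrite val_eqE (inj_eq (@perm_inj _ w)) eq_sym.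
rewrite addn0 [i <= j]leq_eqVlt [w j <= w i]leq_eqVlt (negbTE ne') (negbTE nw) /=.
by rewrite andbC.
Qed.

Theorem proposition2p4 (n : nat) (hn : 1 <= n) (w : 'S_n) :
  count_nonred w = inv_count w + n - 1.
Proof.
case: n hn w => // m _ w.
have H1 : count_nonred w = \sum_(ab : 'I_m.+1 * 'I_m.+1)
    ((w ab.1 <= ab.2) && (w^-1%g ab.2 <= ab.1) && ~~ ((ab.1 == ord_max) && (ab.2 == ord_max)) : nat).
  rewrite /count_nonred card_sum; apply: eq_bigr => [[a b]] _ /=.
  rewrite nonred_char.
  case h1: (w a <= b); case h2: (w^-1%g b <= a) => //=.
  rewrite Dbound // rank_stepp ltnS h1 addn1 /=.
  done.
have H2 : \sum_(ab : 'I_m.+1 * 'I_m.+1) ((w ab.1 <= ab.2) && (w^-1%g ab.2 <= ab.1) : nat)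
  = count_nonred w + 1.
  rewrite H1.
  have E : \sum_(ab : 'I_m.+1 * 'I_m.+1) ((ab.1 == ord_max) && (ab.2 == ord_max) : nat) = 1.
    rewrite -(pair_bigA _ (fun a b : 'I_m.+1 => ((a == ord_max) && (b == ord_max) : nat))) /=.
    rewrite (eq_bigr (fun a : 'I_m.+1 => ((a == ord_max) && predT a : nat))).
      by rewrite sum_pred1.
    move=> a _; case: (a == ord_max) => /=; last by rewrite big1.
    by rewrite sum_eq1.
  rewrite -[X in _ = _ + X]E -big_split /=; apply: eq_bigr => [[a b]] _ /=.
  case: (eqVneq a ord_max) => [->|na]; case: (eqVneq b ord_max) => [->|nb] /=;
    rewrite ?andbT ?andbF ?addn0 //.
  by rewrite !leq_ord.
have := sum_C w; rewrite H2; clear H1 H2; move: (count_nonred w) (inv_count w) => x y; lia.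
Qed.
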